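(* For every (possibly stochastic) local policy S-Local there exists a collectible reward decomposition MDP with $n$ rewards and discount factor $\gamma=1-1/\sqrt{n}$ such that $\frac{\text{S-Local}}{\text{OPT}}\le\frac{8}{\sqrt{n}}$, where S-Local denotes the expected value of the policy on that MDP.
   Context: A collectible reward decomposition MDP is an MDP with deterministic dynamics, an initial state $s_0$, discount $\gamma$, and $n$ reward states $s_1,\dots,s_n$; visiting $s_i$ for the first time yields reward $1$ and each reward can be collected only once. For each $j$ there is an option $o_j$ that follows a shortest path to $s_j$ and terminates when collecting it; its value from state $x$ is $V_j(x)=\gamma^{d(x,s_j)}$ where $d$ is shortest-path distance. A local policy is a mapping $\pi(x,h,\{V_i(x)\}_{i=1}^n)\to\Delta(\{o_i\}_{i=1}^n)$ from the current state $x$, the history $h$ of previous steps (including which rewards were collected) and the option values at $x$, to a distribution over options. The value of a policy is its expected discounted return $\mathbb{E}\sum_k\gamma^{T_k}$ ($T_k$ the time the $k$-th reward is collected), and $\text{OPT}=\max_{(i_1,\dots,i_n)}\sum_{j=0}^{n-1}\gamma^{\sum_{t=0}^{j}d_{i_t,i_{t+1}}}$ with $i_0=s_0$. *)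

(* Defs.v *)
From HB Require Import structures.
From mathcomp Require Import all_boot all_order all_algebra.
From mathcomp Require Import fingroup perm.
From mathcomp Require Import boolp classical_sets reals.
Set Implicit Arguments. Unset Strict Implicit. Unset Printing Implicit Defensive.
Import Order.TTheory GRing.Theory Num.Theory.
Local Open Scope ring_scope.
Local Open Scope classical_set_scope.

(* States are 'I_nst; the deterministic dynamics is given by the list of
   states reachable in one step (one per action) [succ x].  [init] is s_0,
   [rst j] is the reward state s_j, and [nxt x j] is the next state taken by
   option o_j from x (the option follows a shortest path to s_j). *)
Record crmdp (n : nat) := CRMDP {
  nst  : nat;
  succ : 'I_nst -> seq 'I_nst;
  init : 'I_nst;
  rst  : 'I_n -> 'I_nst;
  nxt  : 'I_nst -> 'I_n -> 'I_nst }.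
Arguments succ {n} c _.
Arguments nxt {n} c _ _.
Arguments rst {n} c _.
Arguments init {n} c.

Section Graph.
Variables (n : nat) (M : crmdp n).

Fixpoint reach (k : nat) (x y : 'I_(nst M)) : bool :=
  if k is k'.+1 then (x == y) || has (fun z => reach k' z y) (succ M x)
  else x == y.

(* shortest-path distance (a finite graph with nst states: shortest paths
   have length < nst) *)
Definition dist (x y : 'I_(nst M)) : nat :=
  find (fun k => reach k x y) (iota 0 (nst M)).

Definition valid_crmdp : Prop :=
  injective (rst M) /\
  (forall x j, exists k, reach k x (rst M j)) /\
  (forall x j, (0 < dist x (rst M j))%N ->
      nxt M x j \in succ M x /\
      dist (nxt M x j) (rst M j) = (dist x (rst M j)).-1).

(* states visited (times 1..d) when running option o_j from x *)
Definition opath (x : 'I_(nst M)) (j : 'I_n) : seq 'I_(nst M) :=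
  [seq iter k.+1 (fun y => nxt M y j) x | k <- iota 0 (dist x (rst M j))].

End Graph.
Arguments reach {n} M k x y.
Arguments dist {n} M x y.
Arguments opath {n} M x j.
Arguments valid_crmdp {n} M.

(* One entry of the history: decision state, option values observed there,
   option chosen, states traversed by the option, rewards collected so far
   after the option terminated. *)
Record hentry (R : Type) (n : nat) := HEntry {
  h_state : nat;
  h_vals  : {ffun 'I_n -> R};
  h_opt   : 'I_n;
  h_path  : seq nat;
  h_coll  : {set 'I_n} }.

(* A (possibly stochastic) local policy: from the current state x, the
   history h (with the set of already collected rewards) and the option
   values {V_i(x)}, a probability distribution over the options o_1..o_n. *)
Record local_policy (R : numDomainType) (n : nat) := LocalPolicy {
  lpol :> nat -> seq (hentry R n) -> {set 'I_n} -> {ffun 'I_n -> R} ->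
          {ffun 'I_n -> R};
  lpol_ge0 : forall x h C v i, 0 <= lpol x h C v i;
  lpol_sum1 : forall x h C v, \sum_i lpol x h C v i = 1 }.

Definition disc (R : realType) (n : nat) : R := 1 - (Num.sqrt (n%:R))^-1.

Section Value.
Variables (R : realType) (n : nat) (M : crmdp n) (gamma : R).

Definition optV (x : 'I_(nst M)) (j : 'I_n) : R := gamma ^+ dist M x (rst M j).

(* discounted reward collected (first visits only) while running o_j from x,
   starting at time t with collected set C *)
Definition gain (C : {set 'I_n}) (t : nat) (x : 'I_(nst M)) (j : 'I_n) : R :=
  \sum_(i | (i \notin C) && (rst M i \in opath M x j))
     gamma ^+ (t + (index (rst M i) (opath M x j)).+1).

Definition newC (C : {set 'I_n}) (x : 'I_(nst M)) (j : 'I_n) : {set 'I_n} :=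
  C :|: [set i | rst M i \in opath M x j].

(* expected discounted reward collected during the first K option calls *)
Fixpoint Wk (pi : local_policy R n) (K : nat) (x : 'I_(nst M))
    (h : seq (hentry R n)) (C : {set 'I_n}) (t : nat) : R :=
  if K is K'.+1 then
    let v := [ffun i => optV x i] in
    \sum_j pi (val x) h C v j *
      (gain C t x j +
       Wk pi K' (rst M j)
          (rcons h (HEntry (val x) v j (map val (opath M x j)) (newC C x j)))
          (newC C x j) (t + dist M x (rst M j)))
  else 0.

Definition C0 : {set 'I_n} := [set i | rst M i == init M].

(* expected discounted return  E sum_k gamma^{T_k}  of the policy *)
Definition value (pi : local_policy R n) : R :=
  #|C0|%:R + sup (range (fun K => Wk pi K (init M) [::] C0 0%N)).

Definition tour (s : {perm 'I_n}) : seq 'I_(nst M) :=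
  init M :: [seq rst M (s i) | i <- enum 'I_n].

Definition tour_ret (s : {perm 'I_n}) : R :=
  \sum_(j < n) gamma ^+ (\sum_(t < j.+1)
      dist M (nth (init M) (tour s) t) (nth (init M) (tour s) t.+1)).

Definition OPT : R := \big[Num.max/0]_(s : {perm 'I_n}) tour_ret s.

End Value.
Arguments value {R n} M gamma pi.
Arguments OPT {R n} M gamma.

(* Main.v *)
Require Import Defs.
From HB Require Import structures.
From mathcomp Require Import all_boot all_order all_algebra.
From mathcomp Require Import fingroup perm.
From mathcomp Require Import boolp classical_sets reals.
From mathcomp Require Import zify ring lra.
Import Order.TTheory GRing.Theory Num.Theory.

Module Aux.

Definition adjn (n m x y : nat) : bool :=
  [|| (x == 0) && (0 < y <= n),
      [&& 0 < x, x <= n & ((x < m) && (y == x.+1)) || (y == n.+1)],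
      [&& n < x, x < n + n & y == x.+1] |
      [&& n < x, x == n + n & y == 0]].

Definition deltan (n m x tau : nat) : nat :=
  if x == 0 then 1 else
  if x <= n then (if x == tau then 0 else if (x < tau) && (tau <= m) then tau - x else n.+2)
  else (n + n - x).+2.

Definition nxtn (n m x tau : nat) : nat :=
  if x == 0 then tau else
  if x <= n then (if (x < tau) && (tau <= m) then x.+1 else n.+1)
  else if x < n + n then x.+1 else 0.

Section F.
Variables (n m tau : nat).
Hypotheses (n0 : 0 < n) (mn : m <= n) (t1 : 0 < tau) (tn : tau <= n).

Lemma F1 x : x < (n + n).+1 -> deltan n m x tau = 0 -> x = tau.
Proof. rewrite /deltan => Hx; repeat case: ifP => ? ; lia. Qed.

Lemma F1' : deltan n m tau tau = 0.
Proof. rewrite /deltan; repeat case: ifP => ? ; lia. Qed.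

Lemma F2 x z : x < (n + n).+1 -> z < (n + n).+1 -> adjn n m x z ->
  deltan n m x tau <= (deltan n m z tau).+1.
Proof. rewrite /deltan /adjn => Hx Hz Ha; repeat case: ifP => ? ; lia. Qed.

Lemma F3 x : x < (n + n).+1 -> 0 < deltan n m x tau ->
  [/\ adjn n m x (nxtn n m x tau), deltan n m (nxtn n m x tau) tau = (deltan n m x tau).-1
    & nxtn n m x tau < (n + n).+1].
Proof. move=> Hx; rewrite /nxtn; repeat (case: ifP => ?); rewrite /deltan /adjn /=; repeat (case: ifP => ?); split; lia. Qed.

Lemma F4 x : x < (n + n).+1 -> deltan n m x tau < (n + n).+1.
Proof. rewrite /deltan => Hx; repeat case: ifP => ? ; lia. Qed.
End F.

Lemma deltan_far n m x tau : 0 < x -> x <= n -> x != tau -> m < x ->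
  deltan n m x tau = n.+2.
Proof. move=> H1 H2 H3 H4; rewrite /deltan; repeat (case: ifP => ?); lia. Qed.

Lemma lt2n n t : t <= n -> t < (n + n).+1.
Proof. lia. Qed.

Lemma adj_chain n m t : t < m -> m <= n -> adjn n m t t.+1.
Proof. rewrite /adjn; lia. Qed.

Set Implicit Arguments. Unset Strict Implicit. Unset Printing Implicit Defensive.

Section GraphLemmas.
Variables (n : nat) (M : crmdp n).
Local Notation st := ('I_(nst M)).

Lemma reach_refl k (x : st) : reach M k x x.
Proof. by case: k => [|k] /=; rewrite eqxx. Qed.

Lemma reach_S k (x y : st) : reach M k x y -> reach M k.+1 x y.
Proof.
elim: k x => [|k IH] x /=; first by move=> ->.
case/orP=> [->//|H]; apply/orP; right.
by apply: sub_has H => z; apply: IH.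
Qed.

Lemma reach_le k k' (x y : st) : (k <= k')%N -> reach M k x y -> reach M k' x y.
Proof.
move=> /subnK <-; elim: (k' - k)%N => [//|d IH] H.
by rewrite addSn; apply: reach_S; apply: IH.
Qed.

Lemma reach_succ k (x y z : st) : reach M k x y -> z \in succ M y -> reach M k.+1 x z.
Proof.
elim: k x => [|k IH] x /=.
  move=> /eqP -> Hz; apply/orP; right; apply/hasP; exists z => //=.
case/orP=> [/eqP ->|/hasP [u Hu Hr]] Hz; apply/orP; right; apply/hasP.
  by exists z => //=; rewrite eqxx.
by exists u => //; apply: IH.
Qed.

Lemma reach_trans a b (x y z : st) : reach M a x y -> reach M b y z -> reach M (a + b) x z.
Proof.
elim: a x => [|a IH] x; first by move=> /= /eqP ->.
rewrite addSn /=; case/orP=> [/eqP -> H|/hasP [u Hu Hr] H].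
  have H' : reach M (a + b).+1 y z by apply: reach_le H; lia.
  by move: H' => /=.
by apply/orP; right; apply/hasP; exists u => //; apply: IH.
Qed.

Lemma dist_le k (x y : st) : reach M k x y -> (dist M x y <= k)%N.
Proof.
move=> H; rewrite /dist.
case: (ltnP k (nst M)) => Hk.
  have Hh : has (fun k => reach M k x y) (iota 0 (nst M)).
    by apply/hasP; exists k => //; rewrite mem_iota.
  case: (leqP (find (fun k => reach M k x y) (iota 0 (nst M))) k) => // Hlt.
  have := before_find 0 Hlt; rewrite nth_iota // add0n H //.
apply: leq_trans Hk; apply: leq_trans (find_size _ _) _; by rewrite size_iota.
Qed.

Lemma dist_size (x y : st) : (dist M x y <= nst M)%N.
Proof. by rewrite /dist; apply: leq_trans (find_size _ _) _; rewrite size_iota. Qed.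

Lemma dist0 (x y : st) : dist M x y = 0%N -> x = y.
Proof.
rewrite /dist => H.
have Hpos : (0 < nst M)%N := leq_ltn_trans (leq0n _) (ltn_ord x).
have : has (fun k => reach M k x y) (iota 0 (nst M)).
  by rewrite has_find H size_iota.
by move/(nth_find 0); rewrite H nth_iota //= => /eqP.
Qed.

Lemma dist_xx (x : st) : dist M x x = 0%N.
Proof. by apply/eqP; rewrite -leqn0; apply: (@dist_le 0); rewrite /= eqxx. Qed.

Lemma dist_delta (y : st) (delta : st -> nat) (nx : st -> st) :
  (forall x, delta x = 0%N -> x = y) -> delta y = 0%N ->
  (forall x z, z \in succ M x -> (delta x <= (delta z).+1)%N) ->
  (forall x, (0 < delta x)%N -> nx x \in succ M x /\ delta (nx x) = (delta x).-1) ->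
  (forall x, (delta x < nst M)%N) ->
  forall x, dist M x y = delta x /\ reach M (delta x) x y.
Proof.
move=> H0 Hy Hedge Hstep Hlt.
have Hlow : forall k x, reach M k x y -> (delta x <= k)%N.
  elim=> [|k IH] x /=; first by move=> /eqP ->; rewrite Hy.
  case/orP=> [/eqP ->|/hasP [z Hz Hr]]; first by rewrite Hy.
  by apply: leq_trans (Hedge _ _ Hz) _; rewrite ltnS; apply: IH.
have Hr : forall x, reach M (delta x) x y.
  move=> x; move Ed: (delta x) => d; elim: d x Ed => [|d IH] x Ed.
    by rewrite (H0 _ Ed) reach_refl.
  have [Hs Hd] : nx x \in succ M x /\ delta (nx x) = (delta x).-1 by apply: Hstep; rewrite Ed.
  rewrite Ed /= in Hd.
  by rewrite /=; apply/orP; right; apply/hasP; exists (nx x) => //; apply: IH.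
move=> x; split; last exact: Hr.
apply/eqP; rewrite eqn_leq dist_le ?Hr //=.
rewrite /dist.
have Hh : has (fun k => reach M k x y) (iota 0 (nst M)).
  by apply/hasP; exists (delta x); [rewrite mem_iota add0n Hlt | exact: Hr].
have := nth_find 0 Hh; rewrite nth_iota; last by move: Hh; rewrite has_find size_iota.
by rewrite add0n; apply: Hlow.
Qed.

Lemma opt_path (V : valid_crmdp M) (x : st) j k :
  (k <= dist M x (rst M j))%N ->
  dist M (iter k (fun y => nxt M y j) x) (rst M j) = (dist M x (rst M j) - k)%N /\
  reach M k x (iter k (fun y => nxt M y j) x).
Proof.
case: V => _ [_ V].
elim: k => [|k IH] Hk /=; first by rewrite subn0 eqxx.
have [H1 H2] := IH (ltnW Hk).
have Hp : (0 < dist M (iter k (fun y => nxt M y j) x) (rst M j))%N by rewrite H1 subn_gt0.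
have [Hs Hd] := V _ _ Hp.
split; first by rewrite Hd H1; lia.
exact: reach_succ H2 Hs.
Qed.

Lemma opt_end (V : valid_crmdp M) (x : st) j :
  iter (dist M x (rst M j)) (fun y => nxt M y j) x = rst M j.
Proof.
have [H _] := opt_path V (leqnn (dist M x (rst M j))).
by apply: dist0; rewrite H subnn.
Qed.

Lemma dist_reach (V : valid_crmdp M) (x : st) j : reach M (dist M x (rst M j)) x (rst M j).
Proof.
have [_ H] := opt_path V (leqnn (dist M x (rst M j))).
by rewrite opt_end in H.
Qed.

End GraphLemmas.

Section Model.
Variables (n m w : nat).
Hypotheses (n0 : (0 < n)%N) (mn : (m <= n)%N).

Definition posn (j : 'I_n) : nat := ((j + w) %% n)%N.

Lemma posn_lt j : (posn j < n)%N.
Proof. by rewrite /posn ltn_pmod. Qed.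

Lemma posn_inj : injective posn.
Proof.
move=> j j' /eqP; rewrite /posn eqn_modDr !modn_small // => /eqP H.
exact: val_inj.
Qed.

Definition mdl : crmdp n :=
  @CRMDP n (n + n).+1 (fun x : 'I_(n + n).+1 => filter (fun y : 'I_(n + n).+1 => adjn n m x y) (enum 'I_(n + n).+1))
    (inord 0) (fun j => inord (posn j).+1)
    (fun x j => inord (nxtn n m x (posn j).+1)).

Lemma val_rst j : val (rst mdl j) = (posn j).+1.
Proof. rewrite /= inordK //; have := posn_lt j; lia. Qed.

Lemma val_init : val (init mdl) = 0%N.
Proof. by rewrite /= inordK. Qed.

Lemma mem_succ (x z : 'I_(nst mdl)) : (z \in succ mdl x) = adjn n m x z.
Proof. by rewrite /= mem_filter mem_enum andbT. Qed.

Lemma dist_mdl (x : 'I_(nst mdl)) j :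
  dist mdl x (rst mdl j) = deltan n m x (posn j).+1 /\
  reach mdl (deltan n m x (posn j).+1) x (rst mdl j).
Proof.
have t1 : (0 < (posn j).+1)%N by [].
have tn : ((posn j).+1 <= n)%N by apply: posn_lt.
apply: (@dist_delta _ mdl (rst mdl j) (fun x => deltan n m x (posn j).+1)
          (fun x => nxt mdl x j)).
- move=> y Hy; apply: val_inj; rewrite val_rst; apply: (@F1 n m _ n0 mn t1 tn) => //.
  exact: ltn_ord.
- by rewrite val_rst (@F1' n m _ n0 mn t1 tn).
- move=> y z; rewrite mem_succ => Ha; apply: (@F2 n m _ n0 mn t1 tn) => //; exact: ltn_ord.
- move=> y Hy; have [Ha Hd Hl] := @F3 n m _ n0 mn t1 tn _ (ltn_ord y) Hy.
  have Hv : val (nxt mdl y j) = nxtn n m y (posn j).+1 by rewrite /= inordK.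
  by rewrite mem_succ Hv.
- move=> y; apply: (@F4 n m _ n0 mn t1 tn); exact: ltn_ord.
Qed.

Lemma valid_mdl : valid_crmdp mdl.
Proof.
split; [|split].
- move=> j j' H; apply: posn_inj.
  by have := congr1 val H; rewrite !val_rst => -[].
- by move=> x j; exists (deltan n m x (posn j).+1); case: (dist_mdl x j).
- move=> x j; rewrite (proj1 (dist_mdl x j)) => Hp.
  have tn : ((posn j).+1 <= n)%N by apply: posn_lt.
  have [Ha Hd Hl] := @F3 n m _ n0 mn (ltn0Sn _) tn _ (ltn_ord x) Hp.
  have Hv : val (nxt mdl x j) = nxtn n m x (posn j).+1 by rewrite /= inordK.
  by rewrite mem_succ Hv (proj1 (dist_mdl _ j)) Hv.
Qed.

End Model.

Local Open Scope ring_scope.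

Lemma sum_sub_uniq (R : numDomainType) (I : eqType) (s t : seq I) (F : I -> R) :
  uniq s -> uniq t -> {subset s <= t} -> (forall i, i \in t -> 0 <= F i) ->
  \sum_(i <- s) F i <= \sum_(i <- t) F i.
Proof.
move=> us ut sst F0.
rewrite [X in _ <= X](bigID (fun i => i \in s)) /=.
have -> : \sum_(i <- t | i \in s) F i = \sum_(i <- s) F i.
  rewrite -big_filter; apply: perm_big; apply: uniq_perm => //.
    exact: filter_uniq.
  by move=> x; rewrite mem_filter; apply/andP/idP => [[]//|H]; split => //; apply: sst.
rewrite lerDl; rewrite big_seq_cond; apply: sumr_ge0 => i /andP [H _]; exact: F0.
Qed.

Section ValueLemmas.
Variables (R : realType) (n : nat) (M : crmdp n) (g : R).
Hypotheses (V : valid_crmdp M) (g0 : 0 <= g) (g1 : g < 1).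

Lemma gain_le (C : {set 'I_n}) (t : nat) (x : 'I_(nst M)) (j : 'I_n) (D : nat) : (0 < D)%N ->
  (forall i, i \notin C -> (D <= dist M x (rst M i))%N) ->
  gain g C t x j <= \sum_(k < dist M x (rst M j) | (D <= k.+1)%N) g ^+ (t + k.+1).
Proof.
move=> D0 HD.
set d := dist M x (rst M j).
set P := opath M x j.
set f := fun y => nxt M y j.
have Psz : size P = d by rewrite /P /opath size_map size_iota.
have Pnth : forall k, (k < d)%N -> nth x P k = iter k.+1 f x.
  by move=> k Hk; rewrite /P /opath (nth_map 0%N) ?size_iota // nth_iota.
set idx := fun i => index (rst M i) P.
have idxD : forall i, rst M i \in P -> i \notin C -> (D <= (idx i).+1)%N.
  move=> i Hi HC.
  have Hk : (idx i < d)%N by rewrite -Psz index_mem.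
  have Hr : rst M i = iter (idx i).+1 f x by rewrite -Pnth // nth_index.
  have [_ Hreach] := @opt_path _ M V x j (idx i).+1 Hk.
  rewrite -Hr in Hreach.
  apply: leq_trans (HD _ HC) _; exact: dist_le Hreach.
set F := fun k => g ^+ (t + k.+1).
set cond := fun i => (i \notin C) && (rst M i \in P).
have -> : gain g C t x j = \sum_(k <- map idx (filter cond (index_enum 'I_n))) F k.
  by rewrite big_map big_filter.
rewrite -(big_mkord (fun k => D <= k.+1)%N F) -big_filter.
apply: sum_sub_uniq.
- rewrite map_inj_in_uniq ?filter_uniq ?index_enum_uniq //.
  move=> i i'; rewrite !mem_filter => /andP [/andP [_ Hi] _] /andP [/andP [_ Hi'] _] Heq.
  apply: (proj1 V); by rewrite -(nth_index x Hi) -(nth_index x Hi'); congr nth.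
- exact: filter_uniq (iota_uniq _ _).
- move=> k /mapP [i]; rewrite mem_filter => /andP [/andP [HC Hi] _] ->.
  rewrite mem_filter mem_index_iota /= idxD //= -Psz index_mem //.
- by move=> i _; rewrite /F exprn_ge0.
Qed.

Lemma geom (t D d : nat) : (0 < D)%N ->
  \sum_(k < d | (D <= k.+1)%N) g ^+ (t + k.+1) + g ^+ (t + maxn d.+1 D) / (1 - g)
  = g ^+ (t + D) / (1 - g).
Proof.
move=> D0.
have g1' : 1 - g != 0 by rewrite subr_eq0 eq_sym lt_eqF.
elim: d => [|d IH].
  by rewrite big_ord0 add0r; congr (_ ^+ _ / _); lia.
rewrite big_mkcond big_ord_recr /= -big_mkcond /=.
case: (leqP D d.+1) => HD.
  have -> : maxn d.+2 D = d.+2 by lia.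
  have E : maxn d.+1 D = d.+1 by lia.
  rewrite E in IH; rewrite -IH -addrA; congr (_ + _).
  rewrite (addnS t d.+1) exprS; field => //.
have -> : maxn d.+2 D = maxn d.+1 D by lia.
by rewrite addr0.
Qed.

Section Pol.
Variable pi : local_policy R n.

Definition bnd_hyp (x : 'I_(nst M)) (C : {set 'I_n}) (D : nat) :=
  (0 < D)%N /\ (forall i, i \notin C -> (D <= dist M x (rst M i))%N).

Lemma Wk_step K :
  (forall x h C t D, bnd_hyp x C D -> Wk g pi K x h C t <= g ^+ (t + D) / (1 - g)) ->
  forall x C t D j h', bnd_hyp x C D ->
  gain g C t x j + Wk g pi K (rst M j) h' (newC C x j) (t + dist M x (rst M j))
    <= g ^+ (t + D) / (1 - g).
Proof.
move=> IH x C t D j h' [D0 HD].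
set d := dist M x (rst M j).
pose D' := maxn 1 (D - d).
have HD' : bnd_hyp (rst M j) (newC C x j) D'.
  split; first by rewrite /D'; lia.
  move=> i; rewrite /newC finset.in_setU finset.in_set negb_or => /andP [HC HP].
  set e := dist M (rst M j) (rst M i).
  have H1 : (D <= d + e)%N.
    apply: leq_trans (HD _ HC) _; apply: dist_le.
    exact: reach_trans (dist_reach V x j) (dist_reach V (rst M j) i).
  have H2 : (0 < e)%N.
    rewrite lt0n; apply/negP => /eqP /dist0 Hji.
    case Ed : d => [|d'].
      have Hx : x = rst M j by apply: dist0.
      have := HD _ HC; rewrite -Hji -Hx dist_xx; lia.
    move: HP; rewrite -Hji; apply/negP; rewrite negbK.
    rewrite /opath; apply/mapP; exists d'; first by rewrite mem_iota /= -/d Ed.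
    by rewrite -Ed opt_end.
  rewrite /D'; lia.
apply: le_trans (lerD (gain_le t j D0 HD) (IH _ h' _ (t + d)%N _ HD')) _.
rewrite -addnA.
have -> : (d + D' = maxn d.+1 D)%N by rewrite /D'; lia.
by rewrite geom.
Qed.

Lemma Wk_bound K : forall x h C t D, bnd_hyp x C D ->
  Wk g pi K x h C t <= g ^+ (t + D) / (1 - g).
Proof.
elim: K => [|K IH] x h C t D HD /=.
  by apply: divr_ge0; [exact: exprn_ge0 | rewrite subr_ge0 ltW].
set v := [ffun i => optV g x i].
apply: le_trans (_ : \sum_j pi (val x) h C v j * (g ^+ (t + D) / (1 - g)) <= _).
  apply: ler_sum => j _; apply: ler_wpM2l; first exact: lpol_ge0.
  exact: Wk_step.
by rewrite -mulr_suml lpol_sum1 mul1r.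
Qed.

End Pol.
End ValueLemmas.

Lemma count_window (R : realType) (n m j : nat) : (0 < n)%N -> (m <= n)%N ->
  \sum_(w < n) (if ((j + w) %% n < m)%N then 1 else 0 : R) = m%:R.
Proof.
move=> n0 mn.
pose h := fun w : 'I_n => Ordinal (ltn_pmod (j + w) n0).
have hinj : injective h.
  move=> w w' /(congr1 val) /= /eqP; rewrite eqn_modDl !modn_small // => /eqP.
  exact: val_inj.
pose G := fun k : 'I_n => (if (k < m)%N then 1 else 0 : R).
have -> : \sum_(w < n) (if ((j + w) %% n < m)%N then 1 else 0 : R) = \sum_(w < n) G (h w).
  by [].
rewrite -(reindex_inj (P := xpredT) (F := G) hinj) /G -big_mkcond /=.
by rewrite -(big_ord_widen n (fun _ => 1 : R) mn) sumr_const card_ord.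
Qed.

Lemma window (R : realType) (n m : nat) (p : 'I_n -> R) : (0 < n)%N -> (m <= n)%N ->
  (forall j, 0 <= p j) -> \sum_j p j = 1 ->
  exists w : nat, \sum_(j : 'I_n | ((j + w) %% n < m)%N) p j <= m%:R / n%:R.
Proof.
move=> n0 mn p0 p1.
pose S := fun w : 'I_n => \sum_(j : 'I_n | ((j + w) %% n < m)%N) p j.
have HS : \sum_(w < n) S w = m%:R.
  have E : forall w, S w = \sum_j p j * (if ((j + w) %% n < m)%N then 1 else 0).
    by move=> w; rewrite /S big_mkcond; apply: eq_bigr => j _; case: ifP; rewrite ?mulr1 ?mulr0.
  rewrite (eq_bigr _ (fun w _ => E w)) exchange_big /=.
  rewrite (eq_bigr (fun j => p j * m%:R)) => [|j _]; last by rewrite -mulr_sumr count_window.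
  by rewrite -mulr_suml p1 mul1r.
suff [w Hw] : exists w : 'I_n, S w <= m%:R / n%:R by exists w.
apply: contrapT => Hall.
have Hlt : forall w : 'I_n, m%:R / n%:R < S w.
  by move=> w; rewrite ltNge; apply/negP => H; apply: Hall; exists w.
have : \sum_(w < n) (m%:R / n%:R : R) < \sum_(w < n) S w.
  apply: ltr_sum => //; apply/hasP; exists (Ordinal n0) => //; exact: mem_index_enum.
rewrite HS sumr_const card_ord -[_ *+ n]mulr_natr mulfVK ?ltxx //.
by rewrite pnatr_eq0 -lt0n.
Qed.

Lemma bern (R : realFieldType) (x : R) k : 0 <= x -> x <= 1 ->
  (1 - x) ^+ k * (1 + k%:R * x) <= 1.
Proof.
move=> x0 x1; elim: k => [|k IH]; first by rewrite expr0 mul0r addr0 mulr1.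
have p0 : 0 <= (1 - x) ^+ k by apply: exprn_ge0; lra.
apply: le_trans IH; rewrite exprS.
have H : (1 - x) * (1 + k.+1%:R * x) <= 1 + k%:R * x.
  rewrite -natr1; have k0 : 0 <= k%:R :> R by apply: ler0n.
  nra.
have := ler_wpM2l p0 H.
by rewrite (_ : (1 - x) * (1 - x) ^+ k * (1 + k.+1%:R * x) = (1 - x) ^+ k * ((1 - x) * (1 + k.+1%:R * x))); last ring.
Qed.

Lemma expn_anti (R : realFieldType) (g : R) a b : 0 <= g -> g <= 1 -> (a <= b)%N ->
  g ^+ b <= g ^+ a.
Proof.
move=> g0 g1 /subnK <-; rewrite exprD ler_piMl ?exprn_ge0 //.
by apply: exprn_ile1.
Qed.

Lemma geom_sum (R : realFieldType) (g : R) m :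
  (1 - g) * \sum_(j < m) g ^+ j.+1 = g - g ^+ m.+1.
Proof.
elim: m => [|m IH]; first by rewrite big_ord0 mulr0 expr1 subrr.
by rewrite big_ord_recr /= mulrDr IH !exprS; ring.
Qed.


End Aux.
Import Aux.
Unset Implicit Arguments.
Local Open Scope ring_scope.

Theorem theorem4 (R : realType) (n : nat) (hn : (0 < n)%N)
    (pi : local_policy R n) :
  exists M : crmdp n, valid_crmdp M /\
    value M (disc R n) pi / OPT M (disc R n) <= 8 / Num.sqrt (n%:R).
Proof.
set s := Num.sqrt n%:R.
set g := disc R n.
have n1 : 1 <= n%:R :> R by rewrite ler1n.
have s0 : 0 < s by rewrite sqrtr_gt0 ltr0n.
have ss : s * s = n%:R by rewrite -expr2 sqr_sqrtr // ler0n.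
have s1 : 1 <= s by nra.
have gE : g = 1 - s^-1 by [].
have si0 : 0 < s^-1 by rewrite invr_gt0.
have si1 : s^-1 <= 1 by rewrite invf_le1.
have g0 : 0 <= g by rewrite gE; lra.
have g1 : g < 1 by rewrite gE; lra.
have g1' : 1 - g = s^-1 by rewrite gE; ring.
(* the length m of the good chain *)
have [m Pm Hmin] := @find_ex_minn (fun k => (n <= k * k)%N) (ex_intro _ n (leq_pmulr n hn)).
have m0 : (0 < m)%N by case: m Pm {Hmin} => //; rewrite muln0 leqn0 => /eqP Hn; rewrite Hn in hn.
have mn : (m <= n)%N by apply: Hmin; exact: leq_pmulr.
have Hm1 : (m.-1 * m.-1 < n)%N.
  rewrite ltnNge; apply/negP => /Hmin; lia.
pose p := fun j : 'I_n => pi 0%N [::] (@finset.set0 _) [ffun _ : 'I_n => g] j.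
have [w Hw] := @window R n m p hn mn (fun j => lpol_ge0 _ _ _ _ _ _) (lpol_sum1 _ _ _ _ _).
pose M := mdl n m w.
have V : valid_crmdp M := valid_mdl w hn mn.
exists M; split => //.
have dM : forall x j, dist M x (rst M j) = deltan n m x (posn w j).+1 :=
  fun x j => proj1 (dist_mdl hn mn x j).
have dinit : forall j, dist M (init M) (rst M j) = 1%N.
  by move=> j; rewrite dM; have -> : nat_of_ord (init M) = 0%N by rewrite /= inordK.
set a := g ^+ (0 + 1) / (1 - g).
set b := g + g ^+ (1 + n.+2) / (1 - g).
have a0 : 0 <= a by rewrite /a g1' divr_ge0 ?exprn_ge0 // ltW.
have b0 : 0 <= b by rewrite /b g1' addr_ge0 // divr_ge0 ?exprn_ge0 // ltW.
have C0E : C0 M = finset.set0.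
  apply/finset.setP => i; rewrite finset.in_set finset.in_set0.
  apply/negbTE/eqP => /(congr1 val); rewrite (val_rst w hn mn) /M val_init.
  by [].
have Hv : forall K, Wk g pi K (init M) [::] finset.set0 0 <= a * (m%:R / n%:R) + b.
  case=> [|K]; first by rewrite /= addr_ge0 // mulr_ge0 // divr_ge0.
  cbn [Wk].
  have Hff : [ffun i => optV g (init M) i] = [ffun _ : 'I_n => g].
    by apply/ffunP => i; rewrite !ffunE /optV dinit expr1.
  rewrite Hff val_init.
  apply: le_trans (_ : \sum_j p j * ((if (posn w j < m)%N then a else 0) + b) <= _).
    apply: ler_sum => j _; apply: ler_wpM2l; first exact: lpol_ge0.
    case: ifP => Hc.
      apply: le_trans (_ : _ <= a) _; last by rewrite lerDl.
      have Hb : bnd_hyp (init M) finset.set0 1 by split => // i _; rewrite dinit.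
      exact: (Wk_step V g0 g1 (fun x h C t D HD => Wk_bound V g0 g1 pi K h t HD) 0 j _ Hb).
    rewrite add0r; apply: lerD.
      have Hg := gain_le V g0 0 j (C := finset.set0) (x := init M) (D := 1) (ltn0Sn 0) (fun i _ => eq_leq (esym (dinit i))).
      apply: le_trans Hg _; rewrite dinit big_mkcond big_ord1 /=.
      by rewrite expr1.
    rewrite dinit add0n; apply: Wk_bound => //; split => // i.
    rewrite /newC finset.in_setU finset.in_set0 finset.in_set /=.
    have -> : opath M (init M) j = [:: rst M j].
      by rewrite /opath dinit /=; congr (_ :: _); have := opt_end V (init M) j; rewrite dinit.
    rewrite mem_seq1 => Hi.
    have Hij : posn w i != posn w j.
      apply: contra Hi => /eqP /posn_inj ->; exact: eqxx.
    rewrite dM (val_rst w hn mn) deltan_far //.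
    - exact: posn_lt.
    - by rewrite eqSS eq_sym.
    - by move: Hc => /negbT; rewrite -leqNgt ltnS.
  under eq_bigr => j _ do rewrite mulrDr.
  rewrite big_split /= -mulr_suml lpol_sum1 mul1r lerD2r.
  have -> : \sum_j p j * (if (posn w j < m)%N then a else 0)
            = a * \sum_(j | (posn w j < m)%N) p j.
    rewrite mulr_sumr [RHS]big_mkcond; apply: eq_bigr => j _.
    by case: ifP; rewrite ?mulr0 // mulrC.
  apply: (ler_wpM2l a0); exact: Hw.

pose posO := fun j : 'I_n => Ordinal (posn_lt w hn j).
have posO_inj : injective posO.
  by move=> j j' /(congr1 val) /= /posn_inj.
pose sg := ((perm posO_inj)^-1)%g.
have Hsg : forall k : 'I_n, posn w (sg k) = k.
  by move=> k; have := permKV (perm posO_inj) k; rewrite permE => /(congr1 val).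
have Hnth : forall t, (t <= n)%N -> nth (init M) (tour M sg) t = inord t.
  case=> [|t] Ht //=.
  rewrite (nth_map (Ordinal hn)) ?size_enum_ord //.
  by apply: val_inj; rewrite (val_rst w hn mn) Hsg nth_enum_ord //= inordK // lt2n.
have Hd : forall t, (t < m)%N -> (dist M (inord t) (inord t.+1) <= 1)%N.
  move=> t Ht; apply: (@dist_le _ M 1); apply: (reach_succ (reach_refl 0 _)).
  have Htn : (t < n)%N := leq_trans Ht mn.
  by rewrite mem_succ /= !inordK ?lt2n ?adj_chain // ltnW.
have Hopt : \sum_(j < m) g ^+ j.+1 <= OPT M g.
  rewrite /OPT; apply: le_trans (le_bigmax _ _ sg).
  rewrite /tour_ret (big_ord_widen n (fun j => g ^+ j.+1) mn) big_mkcond.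
  apply: ler_sum => j _; case: ifP => Hj; last exact: exprn_ge0.
  apply: expn_anti => //; first exact: ltW.
  apply: leq_trans (_ : (\sum_(t < j.+1) 1 <= _)%N); last by rewrite sum_nat_const card_ord muln1.
  apply: leq_sum => t _.
  have Ht : (t < m)%N := leq_trans (ltn_ord t) Hj.
  rewrite !Hnth; [exact: Hd | exact: leq_trans Ht mn | exact: ltnW (leq_trans Ht mn)].
have Hval : value M g pi <= a * (m%:R / n%:R) + b.
  rewrite /value C0E finset.cards0 add0r.
  apply: ge_sup; first by exists (Wk g pi 0 (init M) [::] finset.set0 0); exists 0%N.
  by move=> y [K _ <-]; exact: Hv.

set S := \sum_(j < m) g ^+ j.+1.
have sn0 : s != 0 by rewrite gt_eqF.
have GS : S = (g - g ^+ m.+1) * s.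
  have := geom_sum g m; rewrite -/S g1' => <-.
  by rewrite mulrC mulrA mulfV // mul1r.
have mR : s <= m%:R.
  have : n%:R <= m%:R * m%:R :> R by rewrite -natrM ler_nat.
  have m0' : 0 <= m%:R :> R by apply: ler0n.
  rewrite -ss => H.
  by rewrite -(ler_pXn2r (_ : 0 < 2)%N) ?nnegrE ?(ltW s0) // !expr2.
have mR2 : m%:R <= 2 * s.
  case: m m0 Hm1 {Pm Hmin mn Hw M V dM dinit Hv Hval posO posO_inj sg Hsg Hnth Hd Hopt S GS mR b b0 a a0 C0E} => // m' _ /= Hm'.
  have : m'%:R * m'%:R < n%:R :> R by rewrite -natrM ltr_nat.
  have m0' : 0 <= m'%:R :> R by apply: ler0n.
  rewrite -ss -natr1 => H.
  have : m'%:R < s by rewrite -(ltr_pXn2r (_ : 0 < 2)%N) ?nnegrE ?(ltW s0) // !expr2.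
  lra.
have gm : g ^+ m * 2 <= 1.
  have := bern m (ltW si0) si1; rewrite -gE => H.
  have H1 : 1 <= m%:R * s^-1 by rewrite ler_pdivlMr // mul1r.
  have u0 : 0 <= g ^+ m by apply: exprn_ge0.
  apply: le_trans H; apply: (ler_wpM2l u0); lra.
have gn : g ^+ n * s <= 1.
  have := bern n (ltW si0) si1; rewrite -gE -ss mulrK ?unitfE //.
  have u0 : 0 <= g ^+ n by apply: exprn_ge0.
  move=> H; apply: le_trans H; apply: (ler_wpM2l u0); lra.
have Hq : a * (m%:R / n%:R) = g * (m%:R / s).
  by rewrite /a g1' -ss add0n expr1 invrK; field.
have Hb : b = g + g ^+ 3 * (g ^+ n * s).
  by rewrite /b g1' invrK (_ : (1 + n.+2 = n + 3)%N) ?exprD; [ring | by rewrite add1n addn3].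
have q2 : m%:R / s <= 2 by rewrite ler_pdivrMr.
have key : a * (m%:R / n%:R) + b <= 8 / s * S.
  rewrite Hq Hb GS.
  have E : 8 / s * ((g - g ^+ m.+1) * s) = 8 * g * (1 - g ^+ m).
    by rewrite exprS; field.
  rewrite E.
  have v0 : 0 <= g ^+ n * s by rewrite mulr_ge0 ?exprn_ge0 // ltW.
  have h1 : 0 <= g * (2 - m%:R / s) by apply: mulr_ge0; [done | rewrite subr_ge0].
  have h2 : 0 <= g ^+ 3 * (1 - g ^+ n * s) by apply: mulr_ge0; [exact: exprn_ge0 | rewrite subr_ge0].
  have h3 : g ^+ 3 <= g ^+ 1 by apply: expn_anti => //; exact: ltW.
  rewrite expr1 in h3.
  have h4 : 0 <= g * (1 - g ^+ m * 2) by apply: mulr_ge0; [done | rewrite subr_ge0].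
  lra.
have Hfin : value M g pi <= 8 / s * OPT M g.
  apply: le_trans Hval _; apply: le_trans key _.
  by rewrite ler_wpM2l // divr_ge0 // ltW.
have [->|HO] := eqVneq (OPT M g) 0.
  by rewrite invr0 mulr0 divr_ge0 // ltW.
have Opos : 0 < OPT M g.
  have S0 : 0 <= S.
    rewrite GS; apply: mulr_ge0; last exact: ltW.
    have : g ^+ m.+1 <= g ^+ 1 by apply: expn_anti => //; exact: ltW.
    rewrite expr1 subr_ge0 //.
  by rewrite lt_def HO /=; exact: le_trans S0 Hopt.
by rewrite ler_pdivrMr.
Qed.
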